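(* For all $m$, $n\le m$ and $0<\rho<n$, $$K_{\mathrm R}(q^m,n,\rho)\le\frac{q^{mn}}{V_\rho(q^m,n)}\left[1+\ln\big(V_\rho(q^m,n)\big)\right].$$
   Context: The rank $\mathrm{rk}(\mathbf x)$ of $\mathbf x\in\mathrm{GF}(q^m)^n$ is the maximum number of its coordinates linearly independent over $\mathrm{GF}(q)$, and $d_{\mathrm R}(\mathbf x,\mathbf y)=\mathrm{rk}(\mathbf x-\mathbf y)$. $K_{\mathrm R}(q^m,n,\rho)$ is the minimum cardinality of a code in $\mathrm{GF}(q^m)^n$ with rank covering radius $\rho$ (covering radius $=\max_{\mathbf x}\min_{\mathbf c\in C}d_{\mathrm R}(\mathbf x,\mathbf c)$). $V_\rho(q^m,n)=\sum_{u=0}^\rho{n\brack u}\alpha(m,u)$ with $\alpha(m,0)=1$, $\alpha(m,u)=\prod_{i=0}^{u-1}(q^m-q^i)$, ${n\brack u}=\alpha(n,u)/\alpha(u,u)$. *)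

(* Defs.v *)
From HB Require Import structures.
From mathcomp Require Import all_boot all_order all_algebra all_field.
From mathcomp Require Import reals exp.
Set Implicit Arguments. Unset Strict Implicit. Unset Printing Implicit Defensive.
Import Order.TTheory GRing.Theory Num.Theory.

(* GF(q) is the finite field F; GF(q^m) is a field extension L of F with
   \dim {:L} = m (so #|L| = q^m).  [finvect_type L] is L with its canonical
   finType structure, so that codes can be finite sets. *)
Section RankMetric.
Variables (F : finFieldType) (L : fieldExtType F).
Local Notation LL := (finvect_type L).

(* rank of x in GF(q^m)^n: max number of coordinates linearly independent
   over GF(q) = dimension over F of the F-span of the coordinates. *)
Definition rk (n : nat) (x : 'rV[LL]_n) : nat :=
  \dim (<<[seq x ord0 i | i <- enum 'I_n]>>%VS : {vspace LL}).

Definition dR (n : nat) (x y : 'rV[LL]_n) : nat := rk (x - y).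

Definition rank_covers (n rho : nat) (C : {set 'rV[LL]_n}) : bool :=
  [forall x : 'rV[LL]_n, [exists c in C, dR x c <= rho]].

Definition K_R (n rho : nat) : nat :=
  \big[minn/#|[set: 'rV[LL]_n]|]_(C : {set 'rV[LL]_n} | rank_covers rho C) #|C|.
End RankMetric.

Definition alpha (q m u : nat) : nat := \prod_(i < u) (q ^ m - q ^ i).
Definition gbin (q n u : nat) : nat := alpha q n u %/ alpha q u u.
Definition Vol (q m n rho : nat) : nat :=
  \sum_(u < rho.+1) gbin q n u * alpha q m u.

(* Main.v *)
Require Import Defs.
From HB Require Import structures.
From mathcomp Require Import all_boot all_order all_algebra all_field.
From mathcomp Require Import reals exp.
From mathcomp Require Import ring lra zify.
Import Order.TTheory GRing.Theory Num.Theory.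
Set Implicit Arguments. Unset Strict Implicit. Unset Printing Implicit Defensive.

Module Gauss.

Fixpoint qb (q n u : nat) : nat :=
  match n, u with
  | 0, 0 => 1
  | 0, _ => 0
  | n'.+1, 0 => 1
  | n'.+1, u'.+1 => q ^ u'.+1 * qb q n' u'.+1 + qb q n' u'
  end.

Section Gauss.
Variable q : nat.
Hypothesis hq : 1 < q.

Lemma alpha0 n : alpha q n 0 = 1.
Proof. by rewrite /alpha big_ord0. Qed.

Lemma alpha_recr n u : alpha q n u.+1 = alpha q n u * (q ^ n - q ^ u).
Proof. by rewrite /alpha big_ord_recr. Qed.

Lemma alpha_recl n u : alpha q n.+1 u.+1 = (q ^ n.+1 - 1) * q ^ u * alpha q n u.
Proof.
rewrite /alpha big_ord_recl /= expn0 -mulnA; congr (_ * _).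
under eq_bigr do rewrite /bump /= add1n !expnS -mulnBr.
by rewrite big_split /= prod_nat_const card_ord.
Qed.

Lemma alpha_zero n k : alpha q n (n + k).+1 = 0.
Proof.
elim: k => [|k IH]; first by rewrite addn0 alpha_recr subnn muln0.
by rewrite addnS alpha_recr IH.
Qed.

Lemma alpha_pos n u : u <= n -> 0 < alpha q n u.
Proof.
move=> hu; rewrite /alpha prodn_gt0 // => i.
rewrite subn_gt0 ltn_exp2l //; exact: leq_trans (ltn_ord i) hu.
Qed.

Lemma qb_alpha n u : qb q n u * alpha q u u = alpha q n u.
Proof.
elim: n u => [|n IH] [|v] /=; rewrite ?alpha0 ?muln1 //.
  by rewrite -[v.+1]add0n alpha_zero.
rewrite mulnDl -[q ^ v.+1 * _ * _]mulnA IH alpha_recl mulnCA IH.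
rewrite alpha_recr alpha_recl.
case: (leqP v n) => hvn; last first.
  have [k ->] : exists k, v = (n + k).+1 by exists (v - n.+1); lia.
  by rewrite alpha_zero !muln0.
have hab : q ^ v <= q ^ n by rewrite leq_exp2l // ltnW.
have ha : 0 < q ^ v by rewrite expn_gt0; lia.
rewrite !expnS.
move: (q ^ v) (q ^ n) (alpha q n v) hab ha => a b A hab ha.
have [c ->] : exists c, b = a + c by exists (b - a); lia.
rewrite addKn.
have e : q * (a + c) - 1 = (q * a - 1) + q * c by lia.
rewrite e; move: (q * a - 1) => E.
ring.
Qed.

Lemma gbin_qb n u : gbin q n u = qb q n u.
Proof. by rewrite /gbin -qb_alpha mulnK // alpha_pos. Qed.
End Gauss.

End Gauss.
Import Gauss.

Module HarmCover.
Import Order.TTheory GRing.Theory Num.Theory.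
Local Open Scope ring_scope.

Section Harm.
Variable R : realType.
Definition H (k : nat) : R := \sum_(i < k) (i.+1%:R)^-1.

Lemma H_ge0 k : 0 <= H k.
Proof. by apply: sumr_ge0 => i _; rewrite invr_ge0 ler0n. Qed.

Lemma H_diff a k d : (a + k <= d)%N -> (0 < d)%N ->
  k%:R / d%:R <= H (a + k) - H a.
Proof.
move=> hd d0; elim: k hd => [|k IH] hd.
  by rewrite addn0 subrr mul0r.
have IH' : (a + k <= d)%N by rewrite addnS in hd; exact: ltnW.
have {}IH := IH IH'.
rewrite addnS /H big_ord_recr /= -/(H (a + k)).
rewrite -[k.+1]addn1 natrD mulrDl mul1r.
rewrite addrAC; apply: lerD => //.
rewrite lef_pV2 ?posrE ?ltr0n // ler_nat.
by rewrite -addnS.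
Qed.

Lemma H_le_ln k : (0 < k)%N -> H k <= 1 + ln (k%:R : R).
Proof.
case: k => // k _; elim: k => [|k IH].
  by rewrite /H big_ord1 ln1 addr0 invr1.
rewrite /H big_ord_recr /= -/(H k.+1).
have h : ((k.+2)%:R^-1 : R) <= ln (k.+2%:R : R) - ln (k.+1%:R).
  have -> : ln (k.+2%:R : R) - ln (k.+1%:R) = - ln (k.+1%:R / k.+2%:R).
    by rewrite ln_div ?posrE ?ltr0n // opprB.
  have -> : (k.+1%:R : R) / k.+2%:R = 1 + (- (k.+2%:R)^-1).
    rewrite -[k.+2]addn1 natrD; field.
    by apply: lt0r_neq0; have := ler0n R k; lra.
  rewrite -lerN2 opprK; apply: le_ln1Dx.
  rewrite ltrNl opprK invf_lt1 ?ltr0n // ltr1n //.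
apply: (le_trans (lerD IH h)); rewrite le_eqVlt; apply/orP; left; apply/eqP; ring.
Qed.
End Harm.

Section Cover.
Variables (R : realType) (T : finType) (ball : T -> {set T}) (B : nat).
Hypothesis hB1 : forall c, #|ball c| = B.
Hypothesis hB2 : forall x, #|[set c | x \in ball c]| = B.
Hypothesis hrefl : forall c, c \in ball c.

Definition Phi (U : {set T}) : R := \sum_c H R #|ball c :&: U|.

Lemma card_inter (A S : {set T}) : #|A :&: S| = (\sum_(x in S) (x \in A))%N.
Proof.
rewrite -big_mkcondr /= sum1_card; apply: eq_card => x.
by rewrite !inE andbC.
Qed.

Lemma double_count (S : {set T}) : (\sum_c #|ball c :&: S|)%N = (#|S| * B)%N.
Proof.
under eq_bigr do rewrite card_inter.
rewrite exchange_big /= -sum_nat_const; apply: eq_bigr => x _.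
rewrite -(hB2 x) -sum1_card [RHS]big_mkcond /=; apply: eq_bigr => c _.
by rewrite inE; case: (x \in ball c).
Qed.

Lemma cover_ind (U : {set T}) : exists C : {set T},
  (forall x, x \in U -> exists2 c, c \in C & x \in ball c) /\
  (#|C|%:R * B%:R <= Phi U).
Proof.
have [k] := ubnP #|U|; elim: k U => // k IH U hU.
case: (set_0Vmem U) => [->|[x0 x0U]].
  exists set0; split; first by move=> x; rewrite inE.
  by rewrite cards0 mul0r; apply: sumr_ge0 => c _; apply: H_ge0.
case: (@arg_maxnP T x0 predT (fun c => #|ball c :&: U|) isT) => c0 _ hmax.
set d := #|ball c0 :&: U|.
have d0 : (0 < d)%N.
  apply: leq_trans (hmax x0 isT); rewrite card_gt0; apply/set0Pn; exists x0.
  by rewrite inE hrefl.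
set U' := U :\: ball c0.
have hU' : (#|U'| < k)%N.
  have U0 : (0 < #|U|)%N by rewrite card_gt0; apply/set0Pn; exists x0.
  rewrite /U' cardsD setIC -/d; move: d d0 hU => d d0 hU; lia.
have [C' [covC' hC']] := IH U' hU'.
exists (c0 |: C'); split.
  move=> x xU; case: (boolP (x \in ball c0)) => hx.
    by exists c0; rewrite ?setU11.
  have xU' : x \in U' by rewrite inE hx.
  by have [c cC xc] := covC' x xU'; exists c; rewrite // setU1r.
have hPhi : Phi U' + B%:R <= Phi U.
  rewrite -lerBrDl /Phi -sumrB.
  have -> : (B%:R : R) = \sum_c ((#|ball c :&: (ball c0 :&: U)|)%:R / d%:R).
    rewrite -mulr_suml -natr_sum double_count natrM mulrC mulKf //.
    by rewrite pnatr_eq0 -lt0n.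
  apply: ler_sum => c _.
  have e : #|ball c :&: U| = (#|ball c :&: U'| + #|ball c :&: (ball c0 :&: U)|)%N.
    rewrite -(cardsID (ball c0) (ball c :&: U)) addnC /U' setIDA.
    by rewrite [ball c0 :&: U]setIC setIA.
  rewrite e; apply: H_diff => //.
  by rewrite -e; apply: hmax.
apply: le_trans hPhi.
rewrite cardsU1 natrD mulrDl addrC; apply: lerD => //.
by case: (c0 \notin C'); rewrite ?mul1r ?mul0r ?ler0n.
Qed.

Lemma cover_all : exists C : {set T},
  (forall x, exists2 c, c \in C & x \in ball c) /\
  (#|C|%:R * B%:R <= #|T|%:R * H R B).
Proof.
have [C [h1 h2]] := cover_ind [set: T].
exists C; split; first by move=> x; apply: h1; rewrite inE.
apply: le_trans h2 _; rewrite /Phi.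
under eq_bigr do rewrite setIT hB1.
by rewrite sumr_const mulr_natl.
Qed.
End Cover.

End HarmCover.
Import HarmCover.

Module Counting.
Import GRing.Theory.

Section Count.
Variables (F : finFieldType) (L : fieldExtType F).
Local Notation LL := (finvect_type L).
Variable m : nat.
Hypothesis hm : \dim {:L} = m.
Local Notation q := #|F|.

Lemma cardLL : #|LL| = q ^ m.
Proof.
rewrite -(card_vspacef (Vector.class LL)) card_vspace.
by rewrite -hm.
Qed.

Lemma dim_cons (x : LL) (t : seq LL) :
  \dim <<x :: t>> = if x \in <<t>>%VS then \dim <<t>> else (\dim <<t>>).+1.
Proof.
rewrite span_cons; case: ifP => hx.
  by move/addv_idPr: hx => ->.
apply/eqP; rewrite eqn_leq; apply/andP; split.
  have := (dimv_add_leqif <[x]> <<t>>).1; rewrite dim_vline.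
  by case: (x != 0%R) => /= h; lia.
by rewrite (ltn_leqif (dimv_leqif_sup (addvSr <[x]> <<t>>))) subv_add subvv andbT -memvE hx.
Qed.

Lemma inner (t : seq LL) u :
  (\sum_(x : LL) (\dim <<x :: t>> == u)) =
  (\dim <<t>> == u) * q ^ \dim <<t>> + ((\dim <<t>>).+1 == u) * (q ^ m - q ^ \dim <<t>>).
Proof.
under eq_bigr do rewrite dim_cons.
rewrite (bigID (fun x => x \in <<t>>%VS)) /=.
under eq_bigr => x hx do rewrite hx.
under [X in _ + X = _]eq_bigr => x hx do rewrite (negbTE hx).
rewrite !sum_nat_const mulnC [X in _ + X = _]mulnC.
congr (_ * _ + _ * _).
  by rewrite -(card_vspace <<t>>%VS).
rewrite -cardLL -(card_vspace <<t>>%VS) -(cardC (mem <<t>>%VS)) addKn.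
by apply: eq_card => x; rewrite !inE.
Qed.

Definition N n u := \sum_(t : n.-tuple LL) (\dim <<tval t>> == u).

Lemma N0 u : N 0 u = (u == 0).
Proof.
rewrite /N; have -> : (\sum_(t : 0.-tuple LL) (\dim <<tval t>> == u)) = \sum_(t : 0.-tuple LL) (0 == u).
  by apply: eq_bigr => t _; rewrite (tuple0 t) /= span_nil dimv0.
by rewrite sum_nat_const card_tuple expn0 mul1n eq_sym.
Qed.

Lemma NS n u : N n.+1 u = \sum_(t : n.-tuple LL)
  ((\dim <<tval t>> == u) * q ^ \dim <<tval t>> +
   ((\dim <<tval t>>).+1 == u) * (q ^ m - q ^ \dim <<tval t>>)).
Proof.
rewrite /N (reindex (fun p : LL * n.-tuple LL => [tuple of p.1 :: p.2])) /=; last first.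
  exists (fun t : n.+1.-tuple LL => (thead t, [tuple of behead t])).
    by move=> [x t] _ /=; congr (_, _); apply: val_inj.
  by move=> t _; apply: val_inj; rewrite /= [in RHS](tuple_eta t).
rewrite -(pair_big predT predT (fun (x : LL) (t : n.-tuple LL) => (\dim <<x :: tval t>> == u) : nat)) /=.
rewrite exchange_big /=; apply: eq_bigr => t _.
exact: inner.
Qed.

Lemma qb_n0 q' n : qb q' n 0 = 1.
Proof. by case: n. Qed.

Lemma N_qb n u : N n u = qb q n u * alpha q m u.
Proof.
elim: n u => [|n IH] u.
  by rewrite N0; case: u => [|u] /=; rewrite ?alpha0.
rewrite NS; case: u => [|v].
  under eq_bigr => t _ do rewrite /= mul0n addn0.
  have := IH 0; rewrite qb_n0 alpha0 /N => <-.
  by apply: eq_bigr => t _; case: eqP => [->|].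
transitivity (\sum_(t : n.-tuple LL) ((\dim <<tval t>> == v.+1) * q ^ v.+1 + (\dim <<tval t>> == v) * (q ^ m - q ^ v))).
  apply: eq_bigr => t _; rewrite eqSS.
  by case: eqP => [->|_]; case: eqP => [->|_].
rewrite big_split /= -!big_distrl /= -!/(N _ _) !IH /= alpha_recr.
ring.
Qed.
End Count.

End Counting.
Import Counting.

Module BallCount.
Import GRing.Theory.

Section Ball.
Variables (F : finFieldType) (L : fieldExtType F).
Local Notation LL := (finvect_type L).
Variable m : nat.
Hypothesis hm : \dim {:L} = m.
Local Notation q := #|F|.

Lemma sum_eq_lt (k r : nat) : \sum_(u < r) (k == u :> nat) = (k < r).
Proof.
elim: r => [|r IH]; first by rewrite big_ord0.
rewrite big_ord_recr /= IH ltnS.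
by case: ltngtP.
Qed.

Lemma rows_tuples n (P : nat -> nat) :
  \sum_(x : 'rV[LL]_n) P (rk x) = \sum_(t : n.-tuple LL) P (\dim <<tval t>>).
Proof.
rewrite (reindex (fun t : n.-tuple LL => (\row_i tnth t i)%R)) /=; last first.
  exists (fun x : 'rV[LL]_n => [tuple x ord0 i | i < n]).
    by move=> t _; apply: eq_from_tnth => i; rewrite tnth_mktuple mxE.
  by move=> x _; apply/rowP => i; rewrite mxE tnth_mktuple.
apply: eq_bigr => t _; rewrite /rk.
congr (P (\dim <<_>>)).
rewrite -[in RHS](map_tnth_enum t); apply: eq_map => i.
by rewrite mxE.
Qed.

Lemma ball_card n rho :
  #|[set y : 'rV[LL]_n | rk y <= rho]| = Vol q m n rho.
Proof.
rewrite cardsE -sum1_card big_mkcond /=.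
transitivity (\sum_(y : 'rV[LL]_n) \sum_(u < rho.+1) (rk y == u)).
  by apply: eq_bigr => y _; rewrite sum_eq_lt ltnS; change (y \in _) with (rk y <= rho); case: (rk y <= rho).
rewrite (@exchange_big _ 0%N addn) /Vol; apply: eq_bigr => u _.
rewrite (rows_tuples _ (fun k => (k == u) : nat)) -/(N L n u) (N_qb hm) gbin_qb //.
exact: finNzRing_gt1.
Qed.
End Ball.

End BallCount.
Import BallCount.
Import Order.TTheory GRing.Theory Num.Theory.

Lemma bigmin_le (I : eqType) (r : seq I) (P : pred I) (F : I -> nat) x0 i :
  i \in r -> P i -> (\big[minn/x0]_(j <- r | P j) F j <= F i)%N.
Proof.
elim: r => // a r IH; rewrite inE big_cons => /orP[/eqP <- Pi|ir Pi].
  by rewrite Pi geq_minl.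
case: (P a); last exact: IH.
by rewrite (leq_trans (geq_minr _ _)) // IH.
Qed.

Lemma rk0 (F : finFieldType) (L : fieldExtType F) n : rk (0 : 'rV[finvect_type L]_n) = 0%N.
Proof.
rewrite /rk; apply/eqP; rewrite dimv_eq0 -subv0; apply/span_subvP => y.
by case/mapP => i _ ->; rewrite mxE mem0v.
Qed.

Unset Implicit Arguments.
Local Open Scope ring_scope.

Theorem proposition12 (R : realType) (F : finFieldType) (L : fieldExtType F)
    (m n rho : nat) (hm : \dim {:L} = m) (hnm : (n <= m)%N)
    (hrho0 : (0 < rho)%N) (hrhon : (rho < n)%N) :
  let q := #|F| in
  let V := Vol q m n rho in
  ((K_R L n rho)%:R : R) <=
    ((q ^ (m * n))%:R / V%:R) * (1 + ln (V%:R : R)).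
Proof.
cbv zeta; set q := #|F|; set V := Vol q m n rho.
pose LL := finvect_type L.
pose ball (c : 'rV[LL]_n) := [set x : 'rV[LL]_n | (@dR F L n x c <= rho)%N].
have B0 := ball_card hm n rho.
have hB1 : forall c, #|ball c| = V.
  move=> c; rewrite /V -B0 -[RHS](card_preimset _ (can_inj (subrK c))).
  by apply: eq_card => x; rewrite !inE.
have hB2 : forall x, #|[set c | x \in ball c]| = V.
  move=> x; rewrite /V -B0 -[RHS](card_preimset _ (inv_inj (subKr x))).
  by apply: eq_card => c; rewrite !inE.
have hrefl : forall c, c \in ball c.
  by move=> c; rewrite inE /dR subrr rk0.
have [C [covC hC]] := cover_all R hB1 hB2 hrefl.
have V0 : (0 < V)%N by rewrite -(hB1 0) card_gt0; apply/set0Pn; exists 0.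
have hK : (K_R L n rho <= #|C|)%N.
  apply: bigmin_le; first by rewrite mem_index_enum.
  apply/forallP => x; have [c cC xc] := covC x.
  by apply/existsP; exists c; rewrite cC; rewrite inE in xc.
have hN : #|'rV[LL]_n| = (q ^ (m * n))%N.
  by rewrite card_mx (cardLL hm) mul1n expnM.
apply: le_trans (_ : #|C|%:R <= _); first by rewrite ler_nat.
rewrite -hN.
have Vp : (0 : R) < V%:R by rewrite ltr0n.
rewrite mulrAC ler_pdivlMr //.
apply: le_trans hC _.
rewrite ler_wpM2l ?ler0n //.
exact: H_le_ln.
Qed.
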